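(* Let $(X,d_X)$, $\delta,\epsilon,R$ and $F\colon\mathbb{H}^n\to X$ satisfy hypotheses (1)–(4) of the following criterion: (1) each $F\circ\eta_x$ is a geodesic; (2) for distinct $x,x'$, $F\circ\eta_x$ and $F\circ\eta_{x'}$ are two sides of an ideal $\delta$-slim triangle in $X$; (3) $e^{-t}|x-x'|<\epsilon$ implies $d_X(F(x,t),F(x',t))\le R$; (4) $e^{-t_k}|x_k-x_k'|\to\infty$ implies $d_X(F(x_k,t_k),F(x_k',t_k))\to\infty$. Put $\Delta=\max\{3\delta,\,2R/\epsilon+R\}$. Then for every vertical triangle $T=\mathcal{P}\cup\mathcal{Q}\cup\mathcal{R}\subset\mathbb{H}^n$, with $x=x(\mathcal{P})$, $x'=x(\mathcal{Q})$, $$d_X\big(F(x,h_T),F(x',h_T)\big)\le 3\Delta.$$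
   Context: Exponential model $\mathbb{H}^n=\mathbb{R}^{n-1}\times\mathbb{R}$, coordinates $(x,t)$, metric $e^{-2t}|dx|^2+dt^2$; vertical geodesics $\eta_x(t)=(x,t)$. An ideal $\delta$-slim triangle: three bi-infinite geodesics forming an ideal triangle, each side in the closed $\delta$-neighborhood of the union of the other two. A vertical triangle $T=\mathcal{P}\cup\mathcal{Q}\cup\mathcal{R}$ is an ideal triangle in $\mathbb{H}^n$ whose sides $\mathcal{P}=\eta_x(\mathbb{R})$, $\mathcal{Q}=\eta_{x'}(\mathbb{R})$ ($x\neq x'$) are vertical and whose third side $\mathcal{R}$ joins their other endpoints; $x(\mathcal{P})=x$, $x(\mathcal{Q})=x'$. The midpoint $r$ of $\mathcal{R}$ is the point of $\mathcal{R}$ with maximal $t$-coordinate $t(r)$ (so $e^{-t(r)}|x-x'|=2$). The displaced height of $T$ is $h_T=\min\{t\in\mathbb{R} : d_X(F(x,t),F(\mathcal{Q}))\le\Delta \text{ or } d_X(F(\mathcal{P}),F(x',t))\le\Delta\}$, a finite number satisfying $h_T\le t(r)$. *)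

(* Defs.v *)
From Stdlib Require Import Reals Lra Lia.
Open Scope R_scope.

Definition is_metric {X : Type} (d : X -> X -> R) : Prop :=
  (forall x y, 0 <= d x y) /\
  (forall x y, d x y = 0 <-> x = y) /\
  (forall x y, d x y = d y x) /\
  (forall x y z, d x z <= d x y + d y z).

(** Points of R^m: functions nat -> R vanishing from index m on. *)
Definition Vec (m : nat) : Type := {v : nat -> R | forall i, (m <= i)%nat -> v i = 0}.

Fixpoint sumsq (m : nat) (f : nat -> R) : R :=
  match m with
  | O => 0
  | S k => sumsq k f + (f k) ^ 2
  end.

Definition euclid {m : nat} (x y : Vec m) : R :=
  sqrt (sumsq m (fun i => proj1_sig x i - proj1_sig y i)).

Definition geodesic {X : Type} (d : X -> X -> R) (g : R -> X) : Prop :=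
  forall s t, d (g s) (g t) = Rabs (s - t).

(** The end of g at +infinity (b = true) or -infinity (b = false), as a ray. *)
Definition gray {X : Type} (g : R -> X) (b : bool) : R -> X :=
  fun t => g (if b then t else - t).

(** Two geodesic rays converge to the same point at infinity. *)
Definition asymptotic {X : Type} (d : X -> X -> R) (r1 r2 : R -> X) : Prop :=
  exists C, forall t, 0 <= t -> d (r1 t) (r2 t) <= C.

(** g1, g2, g3 form an ideal triangle: consecutive sides share an ideal
    endpoint, each side using its two distinct ends. *)
Definition ideal_triangle {X : Type} (d : X -> X -> R) (g1 g2 g3 : R -> X) : Prop :=
  exists e1 e2 e3 : bool,
    asymptotic d (gray g1 e1) (gray g2 (negb e2)) /\
    asymptotic d (gray g2 e2) (gray g3 (negb e3)) /\
    asymptotic d (gray g3 e3) (gray g1 (negb e1)).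

(** d(p, image g) <= r, with d(p, S) the infimum distance. *)
Definition dist_img_le {X : Type} (d : X -> X -> R) (p : X) (g : R -> X) (r : R) : Prop :=
  forall eta, 0 < eta -> exists s, d p (g s) < r + eta.

(** The side g1 lies in the closed delta-neighborhood of image g2 ∪ image g3. *)
Definition side_in_nbhd {X : Type} (d : X -> X -> R) (delta : R) (g1 g2 g3 : R -> X) : Prop :=
  forall t eta, 0 < eta ->
    exists s, d (g1 t) (g2 s) < delta + eta \/ d (g1 t) (g3 s) < delta + eta.

Definition slim_triangle {X : Type} (d : X -> X -> R) (delta : R) (g1 g2 g3 : R -> X) : Prop :=
  side_in_nbhd d delta g1 g2 g3 /\ side_in_nbhd d delta g2 g3 g1 /\
  side_in_nbhd d delta g3 g1 g2.

Definition ideal_slim_triangle {X : Type} (d : X -> X -> R) (delta : R) (g1 g2 g3 : R -> X) : Prop :=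
  geodesic d g1 /\ geodesic d g2 /\ geodesic d g3 /\
  ideal_triangle d g1 g2 g3 /\ slim_triangle d delta g1 g2 g3.

Definition DeltaC (delta eps Rc : R) : R := Rmax (3 * delta) (2 * Rc / eps + Rc).

(** The set whose minimum is the displaced height h_T
    (F : R^(n-1) x R -> X, written curried, F x t = F(x,t)). *)
Definition height_set {X : Type} {m : nat} (d : X -> X -> R) (F : Vec m -> R -> X)
  (Delta : R) (x x' : Vec m) (t : R) : Prop :=
  dist_img_le d (F x t) (F x') Delta \/ dist_img_le d (F x' t) (F x) Delta.

Definition is_min (P : R -> Prop) (h : R) : Prop :=
  P h /\ forall t, P t -> h <= t.

(* Main.v *)
Require Import Defs.
From Stdlib Require Import Reals Lra.
Open Scope R_scope.

Lemma core {X : Type} (d : X -> X -> R) (g1 g2 : R -> X) (Rc D h s t : R) :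
  is_metric d -> geodesic d g1 -> geodesic d g2 ->
  d (g1 t) (g2 t) <= Rc -> d (g1 h) (g2 s) <= D -> h <= t -> s <= t ->
  d (g1 h) (g2 h) <= 2 * D + Rc.
Proof.
  intros [Hp [He [Hs Ht]]] G1 G2 A B Hh Hst.
  pose proof (Ht (g1 h) (g2 s) (g2 h)) as T1.
  rewrite G2 in T1.
  pose proof (Ht (g1 h) (g2 s) (g2 t)) as T2.
  pose proof (Ht (g1 h) (g2 t) (g1 t)) as T3.
  rewrite G2 in T2. rewrite G1 in T3. rewrite (Hs (g2 t) (g1 t)) in T3.
  pose proof (Ht (g2 s) (g1 h) (g2 t)) as T4.
  pose proof (Ht (g1 h) (g1 t) (g2 t)) as T5.
  rewrite G2 in T4. rewrite G1 in T5. rewrite (Hs (g2 s) (g1 h)) in T4.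
  rewrite (Rabs_left1 (h - t)) in T3, T5 by lra.
  rewrite (Rabs_left1 (s - t)) in T2, T4 by lra.
  unfold Rabs in T1; destruct (Rcase_abs (s - h)); lra.
Qed.

Lemma large_t (E eps a : R) : 0 < eps -> 0 <= E -> exists t, a <= t /\ exp (- t) * E < eps.
Proof.
  intros He HE. exists (Rmax a (E / eps) + 1).
  set (t := Rmax a (E / eps) + 1).
  assert (Ha : a <= Rmax a (E/eps)) by apply Rmax_l.
  assert (Hb : E/eps <= Rmax a (E/eps)) by apply Rmax_r.
  split; [unfold t; lra|].
  assert (Hx : 1 + t <= exp t) by (apply exp_ineq1_le).
  assert (Hq : E < eps * exp t).
  { assert (E = eps * (E / eps)) by (field; lra).
    assert (eps * (E/eps) < eps * exp t) by (apply Rmult_lt_compat_l; unfold t in *; lra). lra. }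
  rewrite exp_Ropp.
  assert (0 < exp t) by apply exp_pos.
  apply (Rmult_lt_reg_r (exp t)); auto.
  replace (/ exp t * E * exp t) with E by (field; lra). lra.
Qed.

Lemma le_eps (a b : R) : (forall e, 0 < e -> a <= b + e) -> a <= b.
Proof.
  intros H. destruct (Rle_dec a b); auto.
  specialize (H ((a - b)/2)). lra.
Qed.

Theorem claim2p3 (n : nat) (X : Type) (d : X -> X -> R) (delta eps Rc : R)
  (F : Vec (n - 1) -> R -> X)
  (Hd : is_metric d)
  (Heps : 0 < eps)
  (H1 : forall x, geodesic d (F x))
  (H2 : forall x x', x <> x' ->
          exists g3, ideal_slim_triangle d delta (F x) (F x') g3)
  (H3 : forall x x' t, exp (- t) * euclid x x' < eps -> d (F x t) (F x' t) <= Rc)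
  (H4 : forall (xk xk' : nat -> Vec (n - 1)) (tk : nat -> R),
          cv_infty (fun k => exp (- tk k) * euclid (xk k) (xk' k)) ->
          cv_infty (fun k => d (F (xk k) (tk k)) (F (xk' k) (tk k))))
  (x x' : Vec (n - 1)) (Hxx' : x <> x')
  (hT : R)
  (HhT : is_min (height_set d F (DeltaC delta eps Rc) x x') hT) :
  d (F x hT) (F x' hT) <= 3 * DeltaC delta eps Rc.
Proof.
  set (De := DeltaC delta eps Rc).
  assert (HE : 0 <= euclid x x') by (unfold euclid; apply sqrt_pos).
  destruct (large_t (euclid x x') eps 0 Heps HE) as [t0 [_ Ht0]].
  pose proof (H3 _ _ _ Ht0) as HR.
  destruct Hd as [Hp [Hz [Hs Htr]]].
  assert (Rc0 : 0 <= Rc) by (pose proof (Hp (F x t0) (F x' t0)); lra).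
  assert (RcD : Rc <= De).
  { unfold De, DeltaC. eapply Rle_trans; [|apply Rmax_r].
    assert (0 <= 2 * Rc / eps).
    { unfold Rdiv. apply Rmult_le_pos; [lra|]. left; apply Rinv_0_lt_compat; lra. }
    lra. }
  assert (Hd : is_metric d) by (repeat split; auto; apply Hz).
  assert (Main : d (F x hT) (F x' hT) <= 2 * De + Rc).
  { destruct HhT as [[Hc|Hc] _]; apply le_eps; intros e He.
    - destruct (Hc (e/2)) as [s Hsd]; [lra|].
      destruct (large_t (euclid x x') eps (Rmax hT s) Heps HE) as [t [Ht Htt]].
      pose proof (Rmax_l hT s); pose proof (Rmax_r hT s).
      pose proof (core d (F x) (F x') Rc (De + e/2) hT s t Hd (H1 x) (H1 x')
                   (H3 _ _ _ Htt) ltac:(unfold De in *; lra) ltac:(lra) ltac:(lra)).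
      lra.
    - destruct (Hc (e/2)) as [s Hsd]; [lra|].
      destruct (large_t (euclid x x') eps (Rmax hT s) Heps HE) as [t [Ht Htt]].
      pose proof (Rmax_l hT s); pose proof (Rmax_r hT s).
      pose proof (H3 _ _ _ Htt) as Hq. rewrite Hs in Hq.
      pose proof (core d (F x') (F x) Rc (De + e/2) hT s t Hd (H1 x') (H1 x)
                   Hq ltac:(unfold De in *; lra) ltac:(lra) ltac:(lra)).
      rewrite Hs. lra. }
  lra.
Qed.
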